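(* Let $A=[a_{ij}]_{i,j=1}^n$ be the transition matrix of a Markov chain on $n$ states (so $a_{ij}\ge 0$ and each row of $A$ sums to $1$). For each positive integer $N$, let $\mu_0^{(N)}\in\mathbb{N}^n$ be a distribution of $N$ particles (nonnegative integer entries summing to $N$), and let $M^{(N)}=[m^{(N)}_{ij}]\in\mathbb{N}^{n\times n}$ be a matrix with nonnegative integer entries such that $M^{(N)}\mathbf{1}=\mu_0^{(N)}$ and $\mathrm{supp}(M^{(N)})\subseteq \mathrm{supp}(\mathrm{diag}(\mu_0^{(N)})A)$. Then there exists a constant $C>0$ such that for all $N$, \[ \left|\log\!\left(P_{\mu_0^{(N)},A}(M^{(N)})\right)+H\!\left(M^{(N)}\,\middle|\,\mathrm{diag}(\mu_0^{(N)})A\right)\right|\le C\log(N). \]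
   Context: $\mathbf{1}$ denotes the $n\times 1$ vector of ones; $\mathrm{supp}(\cdot)$ of a matrix is the set of indices of its nonzero entries. For $\mu_0\in\mathbb{N}^n$ and $M\in\mathbb{N}^{n\times n}$ with $M\mathbf{1}=\mu_0$, the probability of the mass transfer matrix $M$ (where $m_{ij}$ is the number of particles moving from state $i$ to state $j$ when each particle independently moves according to $A$) is \[ P_{\mu_0,A}(M)=\prod_{i=1}^n\left(\binom{(\mu_0)_i}{m_{i1},m_{i2},\dots,m_{in}}\prod_{j=1}^n a_{ij}^{m_{ij}}\right), \] with multinomial coefficients. For nonnegative vectors or matrices $p,q$ of the same dimension, the Kullback–Leibler divergence is $H(p|q)=\sum_i p_i\log(p_i/q_i)$, with the convention $0\log 0=0$. *)

(* Defs.v *)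
From HB Require Import structures.
From mathcomp Require Import all_boot all_order all_algebra.
From mathcomp Require Import reals exp.
Set Implicit Arguments. Unset Strict Implicit. Unset Printing Implicit Defensive.
Import Order.TTheory GRing.Theory Num.Theory.
Local Open Scope ring_scope.

Definition multinom (R : realType) (n : nat) (mu : nat) (m : 'I_n -> nat) : R :=
  (mu`!)%:R / \prod_(j < n) ((m j)`!)%:R.

Definition transfer_prob (R : realType) (n : nat) (mu0 : 'I_n -> nat)
    (A : 'M[R]_n) (M : 'M[nat]_n) : R :=
  \prod_(i < n) (multinom R (mu0 i) (fun j => M i j) *
                 \prod_(j < n) (A i j) ^+ (M i j)).

Definition diagA (R : realType) (n : nat) (mu0 : 'I_n -> nat) (A : 'M[R]_n)
  : 'M[R]_n := \matrix_(i, j) ((mu0 i)%:R * A i j).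

Definition KL (R : realType) (n : nat) (p q : 'M[R]_n) : R :=
  \sum_(i < n) \sum_(j < n) (if p i j == 0 then 0 else p i j * ln (p i j / q i j)).

(* Main.v *)
Require Import Defs.
From HB Require Import structures.
From mathcomp Require Import all_boot all_order all_algebra.
From mathcomp Require Import reals exp.
From mathcomp Require Import ring lra.
Import Order.TTheory GRing.Theory Num.Theory.
Local Open Scope ring_scope.

Section S.
Variable R : realType.
Definition lf (k : nat) : R := ln (k`!%:R).
Definition gg (k : nat) : R := lf k - k%:R * ln (k%:R).
Definition phi (k : nat) : R := gg k + k%:R.

Lemma phiS k : phi k.+1 = phi k + 1 - k%:R * (ln k.+1%:R - ln k%:R).
Proof.
rewrite /phi /gg /lf factS natrM lnM ?posrE ?ltr0n ?fact_gt0 //.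
rewrite -addn1 natrD; lra.
Qed.

Lemma ratio_le k : (0 < k)%N -> k%:R * (ln k.+1%:R - ln k%:R) <= 1 :> R.
Proof.
move=> k0; have kp : 0 < k%:R :> R by rewrite ltr0n.
rewrite -ln_div ?posrE ?ltr0n //.
have -> : k.+1%:R / k%:R = 1 + k%:R^-1 :> R.
  by rewrite -addn1 natrD mulrDl divff ?gt_eqF // mul1r addrC.
have h : ln (1 + k%:R^-1) <= k%:R^-1 :> R.
  apply: le_ln1Dx; apply: lt_le_trans (_ : 0 <= _); first by rewrite ltrN10.
  by rewrite invr_ge0 ltW.
apply: le_trans (ler_wpM2l (ltW kp) h) _; by rewrite mulfV ?lt0r_neq0.
Qed.

Lemma ratio_ge k : (0 < k)%N -> 1 <= k.+1%:R * (ln k.+1%:R - ln k%:R) :> R.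
Proof.
move=> k0; have kp : 0 < k.+1%:R :> R by rewrite ltr0n.
have kp' : 0 < k%:R :> R by rewrite ltr0n.
have h : ln (k%:R / k.+1%:R) <= - k.+1%:R^-1 :> R.
  have -> : k%:R / k.+1%:R = 1 + - k.+1%:R^-1 :> R.
    move: kp; rewrite -addn1 natrD => kp; field; exact: lt0r_neq0.
  apply: le_ln1Dx; rewrite ltrN2 invf_lt1 // ltr1n //.
move: h; rewrite ln_div ?posrE // => h.
have : k.+1%:R^-1 <= ln k.+1%:R - ln k%:R :> R.
  by move: h; rewrite -opprB lerN2.
by rewrite -(ler_pM2l kp) mulfV ?gt_eqF.
Qed.

Lemma phi0 : phi 0 = 0.
Proof. by rewrite /phi /gg /lf /= ln1 mul0r subrr addr0. Qed.

Lemma phi_ge0 k : 0 <= phi k.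
Proof.
elim: k => [|k IH]; first by rewrite phi0.
rewrite phiS; case: k IH => [|k] IH; first by rewrite mul0r subr0; lra.
have := @ratio_le k.+1 (ltn0Sn k); set d := (_ * _); lra.
Qed.

Lemma phi_le k : (0 < k)%N -> phi k <= 1 + ln k%:R.
Proof.
elim: k => // k IH _; rewrite phiS.
case: k IH => [|k] IH; first by rewrite phi0 mul0r ln1; lra.
have := IH (ltn0Sn k); have := @ratio_ge k.+1 (ltn0Sn k).
set l2 := ln k.+2%:R; set l1 := ln k.+1%:R.
rewrite -[k.+2]addn1 natrD mulrDl mul1r; set a := k.+1%:R. lra.
Qed.

Lemma ln_prod (I : finType) (F : I -> R) : (forall i, 0 < F i) ->
  0 < \prod_i F i /\ ln (\prod_i F i) = \sum_i ln (F i).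
Proof.
move=> Fp; apply: (big_ind2 (fun a b => 0 < a /\ ln a = b)).
- by rewrite ln1.
- move=> a b c d [a0 <-] [c0 <-]; split; first exact: mulr_gt0.
  by rewrite lnM ?posrE.
- by move=> i _; split.
Qed.
End S.

Theorem proposition1 (R : realType) (n : nat) (A : 'M[R]_n)
  (mu0 : nat -> 'I_n -> nat) (M : nat -> 'M[nat]_n) :
  (forall i j, 0 <= A i j) ->
  (forall i, \sum_(j < n) A i j = 1) ->
  (forall N, (0 < N)%N -> (\sum_(i < n) mu0 N i)%N = N) ->
  (forall N, (0 < N)%N -> forall i, (\sum_(j < n) M N i j)%N = mu0 N i) ->
  (forall N, (0 < N)%N -> forall i j,
      M N i j != 0%N -> diagA (mu0 N) A i j != 0) ->
  exists C : R, 0 < C /\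
    forall N, (0 < N)%N ->
      `| ln (transfer_prob (mu0 N) A (M N))
         + KL (map_mx (fun k : nat => k%:R) (M N)) (diagA (mu0 N) A) |%R
      <= C * ln (N%:R).
Proof.
move=> A0 A1 Hmu HM Hsupp.
have l2p : 0 < ln (2%:R : R) by apply: ln_gt0; rewrite ltr1n.
exists ((n + n * n).+1%:R * (1 + (ln (2%:R : R))^-1)); split.
  by apply: mulr_gt0; rewrite ?ltr0n //; apply: addr_gt0; rewrite ?invr_gt0.
move=> N N0.
have HMi := HM N N0; have Hs := Hsupp N N0; have HmuN := Hmu N N0.
move: HMi Hs HmuN.
set mu := mu0 N; set m := M N => HMi Hs HmuN.
have Apos i j : m i j != 0%N -> 0 < A i j.
  move=> /Hs; rewrite mxE mulf_eq0 negb_or => /andP [_ h].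
  by rewrite lt_def h A0.
have hleq i j : (m i j <= mu i)%N by rewrite -(HMi i) (bigD1 j) //= leq_addr.
have mupos i j : m i j != 0%N -> 0 < (mu i)%:R :> R.
  move=> h; rewrite ltr0n; apply: leq_trans (hleq i j); by rewrite lt0n.
have key : ln (transfer_prob mu A m) + KL (map_mx (fun k : nat => (k%:R : R)) m) (diagA mu A)
    = \sum_i (gg R (mu i) - \sum_j gg R (m i j)).
  have fac i : 0 < multinom R (mu i) (fun j => m i j) * \prod_j A i j ^+ m i j /\
     ln (multinom R (mu i) (fun j => m i j) * \prod_j A i j ^+ m i j)
     = lf R (mu i) - \sum_j lf R (m i j) + \sum_j (m i j)%:R * ln (A i j).
    have [Pp Pl] : 0 < \prod_j ((m i j)`!)%:R :> R /\
        ln (\prod_j ((m i j)`!)%:R : R) = \sum_j ln (((m i j)`!)%:R : R).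
      by apply: ln_prod => j; rewrite ltr0n fact_gt0.
    have [Qp Ql] : 0 < \prod_j A i j ^+ m i j /\
        ln (\prod_j A i j ^+ m i j) = \sum_j ln (A i j ^+ m i j).
      apply: ln_prod => j; have [->|h] := eqVneq (m i j) 0%N; first by rewrite expr0.
      by apply: exprn_gt0; apply: Apos.
    have Mp : 0 < multinom R (mu i) (fun j => m i j).
      by rewrite /multinom; apply: divr_gt0 => //; rewrite ltr0n fact_gt0.
    split; first exact: mulr_gt0.
    rewrite lnM ?posrE // Ql /multinom ln_div ?posrE ?ltr0n ?fact_gt0 // Pl.
    congr (_ + _); apply: eq_bigr => j _.
    have [->|h] := eqVneq (m i j) 0%N; first by rewrite expr0 ln1 mul0r.
    by rewrite lnXn ?Apos // mulr_natl.
  have [_ Tl] := @ln_prod R _ _ (fun i => (fac i).1).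
  have E i : ln (multinom R (mu i) (fun j => m i j) * \prod_j A i j ^+ m i j) +
      \sum_j (if (map_mx (fun k : nat => (k%:R : R)) m) i j == 0 then 0
             else (map_mx (fun k : nat => (k%:R : R)) m) i j *
                  ln ((map_mx (fun k : nat => (k%:R : R)) m) i j / diagA mu A i j))
      = gg R (mu i) - \sum_j gg R (m i j).
    rewrite (fac i).2.
    have -> : \sum_j (if (map_mx (fun k : nat => (k%:R : R)) m) i j == 0 then 0
             else (map_mx (fun k : nat => (k%:R : R)) m) i j *
                  ln ((map_mx (fun k : nat => (k%:R : R)) m) i j / diagA mu A i j))
      = \sum_j ((m i j)%:R * ln (m i j)%:R - (m i j)%:R * ln (mu i)%:R
                 - (m i j)%:R * ln (A i j)) :> R.
      apply: eq_bigr => j _; rewrite !mxE pnatr_eq0.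
      have [->|h] := eqVneq (m i j) 0%N; first by rewrite !mul0r !subrr.
      rewrite ln_div ?posrE ?ltr0n ?lt0n // ?lnM ?posrE ?(mupos i j) ?Apos //; last first.
        by apply: mulr_gt0; [apply: (mupos i j) | apply: Apos].
      lra.
    rewrite /gg.
    have -> : (mu i)%:R * ln (mu i)%:R = \sum_j (m i j)%:R * ln (mu i)%:R :> R.
      by rewrite -mulr_suml -natr_sum HMi.
    rewrite !sumrB; lra.
  by rewrite /transfer_prob Tl /KL -(eq_bigr _ (fun i _ => E i)) big_split.
rewrite key.
have muN i : (mu i <= N)%N by rewrite -HmuN (bigD1 i) //= leq_addr.
have mN i j : (m i j <= N)%N := leq_trans (hleq i j) (muN i).
have [N1|N2] := eqVneq N 1%N.
  have g01 k : (k <= 1)%N -> gg R k = 0.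
    by case: k => [|[|]] // _; rewrite /gg /lf /= ln1 ?mul0r ?mul1r subrr.
  rewrite big1 ?normr0 ?N1 ?ln1 ?mulr0 // => i _.
  rewrite g01 -?N1 // big1 ?subrr // => j _; rewrite g01 -?N1 //.
have N2' : (1 < N)%N by rewrite ltn_neqAle eq_sym N2 N0.
set L := ln (N%:R : R); set B := 1 + L.
have L0 : ln (2%:R : R) <= L by rewrite /L ler_ln ?posrE ?ltr0n ?ler_nat.
have B0 : 0 <= B by rewrite /B; lra.
have phiB k : (k <= N)%N -> phi R k <= B.
  case: k => [|k] kN; first by rewrite phi0 /B; lra.
  apply: le_trans (@phi_le R k.+1 (ltn0Sn k)) _; rewrite /B lerD2l.
  by rewrite ler_ln ?posrE ?ltr0n // ler_nat.
have ggphi k : gg R k = phi R k - k%:R by rewrite /phi addrK.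
have -> : \sum_i (gg R (mu i) - \sum_j gg R (m i j))
        = \sum_i (phi R (mu i) - \sum_j phi R (m i j)).
  apply: eq_bigr => i _; rewrite ggphi.
  under eq_bigr do rewrite ggphi.
  rewrite sumrB -natr_sum HMi; lra.
apply: le_trans (ler_norm_sum _ _ _) _.
apply: le_trans (_ : \sum_(i < n) (B + n%:R * B) <= _).
  apply: ler_sum => i _.
  have h1 := phi_ge0 R (mu i); have h2 := phiB _ (muN i).
  have h3 : 0 <= \sum_j phi R (m i j) by apply: sumr_ge0 => j _; apply: phi_ge0.
  have h4 : \sum_j phi R (m i j) <= n%:R * B.
    apply: le_trans (_ : \sum_(j < n) B <= _).
      by apply: ler_sum => j _; apply: phiB.
    by rewrite sumr_const card_ord mulr_natl.
  rewrite ler_norml; apply/andP; split; lra.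
rewrite sumr_const card_ord -mulr_natl.
have l1 : 1 <= L / ln (2%:R : R) by rewrite ler_pdivlMr // mul1r.
have HB : B <= (1 + (ln (2%:R : R))^-1) * L.
  rewrite /B mulrDl mul1r mulrC; lra.
apply: le_trans (_ : (n + n * n).+1%:R * B <= _).
  have -> : (B + n%:R * 1 * B) *+ n = (n + n * n)%:R * B.
    by rewrite -mulr_natl natrD natrM; ring.
  by apply: ler_wpM2r => //; rewrite ler_nat.
rewrite -mulrA; apply: ler_wpM2l => //.
Qed.
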